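(* Let $k$ be a positive integer, let $e$ be the all-ones vector of length $m$, and let $S$ be a nonnegative integral vector of length $n$. Then $\mathcal{C}_{m,n}(ke,S)$ is nonempty if and only if there is a row convex matrix in $\mathcal{A}_{m,n}(ke,S)$.
   Context: $\mathcal{A}_{m,n}(R,S)$ is the set of $m\times n$ $(0,1)$-matrices with row sum vector $R$ and column sum vector $S$. A $(0,1)$-matrix is row convex if the 1's in each row occur consecutively, column convex if the 1's in each column occur consecutively, and convex if it is both. $\mathcal{C}_{m,n}(R,S)$ is the set of convex matrices in $\mathcal{A}_{m,n}(R,S)$. *)

(* Defs.v *)
From mathcomp Require Import all_boot all_algebra.
Set Implicit Arguments. Unset Strict Implicit. Unset Printing Implicit Defensive.

Definition zero_one (m n : nat) (A : 'M[nat]_(m, n)) : Prop :=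
  forall i j, A i j <= 1.

Definition in_A (m n : nat) (R : 'I_m -> nat) (S : 'I_n -> nat)
    (A : 'M[nat]_(m, n)) : Prop :=
  [/\ zero_one A,
      forall i, \sum_(j < n) A i j = R i
    & forall j, \sum_(i < m) A i j = S j].

Definition row_convex (m n : nat) (A : 'M[nat]_(m, n)) : Prop :=
  forall (i : 'I_m) (j1 j j2 : 'I_n),
    j1 <= j -> j <= j2 -> A i j1 = 1 -> A i j2 = 1 -> A i j = 1.

Definition col_convex (m n : nat) (A : 'M[nat]_(m, n)) : Prop :=
  forall (j : 'I_n) (i1 i i2 : 'I_m),
    i1 <= i -> i <= i2 -> A i1 j = 1 -> A i2 j = 1 -> A i j = 1.

Definition convex (m n : nat) (A : 'M[nat]_(m, n)) : Prop :=
  row_convex A /\ col_convex A.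

Definition in_C (m n : nat) (R : 'I_m -> nat) (S : 'I_n -> nat)
    (A : 'M[nat]_(m, n)) : Prop :=
  in_A R S A /\ convex A.

(* Main.v *)
Require Import Defs.
From mathcomp Require Import all_boot all_algebra.
From mathcomp Require Import zify.

Lemma count_interval n a b :
  \sum_(j < n) ((a <= j) && (j < b) : nat) = minn n b - a.
Proof.
elim: n => [|n IH]; first by rewrite big_ord0 min0n.
rewrite big_ord_recr /= IH.
case: (leqP a n) => Ha; case: (ltnP n b) => Hb /=; lia.
Qed.

Lemma nb (b : bool) : (b : nat) = 1 <-> b.
Proof. by case: b. Qed.

Lemma row_lemma n k (r : 'I_n -> nat) : 0 < k -> (forall j, r j <= 1) ->
  \sum_(j < n) r j = k ->
  (forall j1 j j2 : 'I_n, j1 <= j -> j <= j2 -> r j1 = 1 -> r j2 = 1 -> r j = 1) ->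
  exists s, s + k <= n /\ forall j : 'I_n, r j = ((s <= j) && (j < s + k) : nat).
Proof.
move=> k0 r01 rs rc.
case: (pickP (fun j => r j == 1)) => [j0 Hj0|H0]; last first.
  have: \sum_(j < n) r j = 0.
    apply: big1 => j _; have := r01 j; have := H0 j.
    by case: (r j) => [|[|]].
  lia.
case: (arg_minnP (P := fun j => r j == 1) (fun j : 'I_n => val j) Hj0) => s Hs smin.
case: (arg_maxnP (P := fun j => r j == 1) (fun j : 'I_n => val j) Hj0) => t Ht tmax.
have key : forall j, r j = ((s <= j) && (j < t.+1) : nat).
  move=> j; case: (boolP ((s <= j) && (j < t.+1))) => /= H.
    by case/andP: H => H1 H2; apply: (rc s j t) => //; apply/eqP.
  case E: (r j == 1).
    have h1 : s <= j := smin j E; have h2 : j < t.+1 := tmax j E.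
    by rewrite h1 h2 in H.
  have := r01 j; move: E; case: (r j) => [|[|]] //.
have st : s <= t by apply: smin.
have tn : t < n by [].
move: rs; under eq_bigr do rewrite key.
rewrite count_interval => rs.
exists s; split; first lia.
move=> j; rewrite key.
by rewrite (_ : s + k = t.+1) //; lia.
Qed.

Definition mk m n (c : seq nat) k : 'M[nat]_(m,n) :=
  \matrix_(i < m, j < n) ((nth 0 c i <= j) && (j < nth 0 c i + k) : nat).

Theorem mainTheorem5 (m n k : nat) (S : 'I_n -> nat) :
  0 < k ->
  (exists A : 'M[nat]_(m, n), in_C (fun _ => k) S A) <->
  (exists A : 'M[nat]_(m, n), in_A (fun _ => k) S A /\ row_convex A).
Proof.
move=> k0; split.
  by case=> A [HA [HR _]]; exists A.
case=> A [[A01 Arow Acol] Arc].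
have: forall i, exists s, s + k <= n /\
   forall j : 'I_n, A i j = ((s <= j) && (j < s + k) : nat).
  by move=> i; apply: row_lemma => // j1 j j2; apply: Arc.
case/fin_all_exists => s Hs.
set c := sort leq [seq s i | i <- index_enum 'I_m].
have pc : perm_eq c [seq s i | i <- index_enum 'I_m] by rewrite perm_sort.
have sc : sorted leq c by apply: sort_sorted; exact: leq_total.
have szc : size c = m by rewrite (perm_size pc) size_map -[index_enum _]enumT size_enum_ord.
have cb : forall x, x \in c -> x + k <= n.
  move=> x; rewrite (perm_mem pc) => /mapP [i _ ->]; exact: (Hs i).1.
have cle : forall i1 i2 : 'I_m, i1 <= i2 -> nth 0 c i1 <= nth 0 c i2.
  move=> i1 i2 H; apply: (sorted_leq_nth leq_trans leqnn) => //;
  by rewrite inE szc.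
exists (mk m n c k); rewrite /mk.
split; first split.
- by move=> i j; rewrite mxE; case: (_ && _).
- move=> i; under eq_bigr do rewrite mxE.
  rewrite count_interval.
  have hi : i < size c by rewrite szc.
  have := cb (nth 0 c i) (mem_nth 0 hi); lia.
- move=> j; rewrite -Acol.
  under eq_bigr do rewrite mxE.
  under [RHS]eq_bigr do rewrite (Hs _).2.
  rewrite -(big_map s xpredT (fun x => ((x <= j) && (j < x + k) : nat))).
  rewrite -(perm_big _ pc) (big_nth 0) szc big_mkord.
  by [].
- split.
  + move=> i j1 j j2 h1 h2; rewrite !mxE => /nb/andP[a1 a2] /nb/andP[b1 b2].
    apply/nb/andP; split; lia.
  + move=> j i1 i i2 h1 h2; rewrite !mxE => /nb/andP[a1 a2] /nb/andP[b1 b2].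
    have := cle _ _ h1; have := cle _ _ h2 => c1 c2.
    apply/nb/andP; split; lia.
Qed.
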